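(* Let $\{X^{(n)}(t),t\ge0\}$, $n\in\mathbb N$, be a family of Markov processes on $V_n$ with generators $L_n$, and let $\{\eta(t),t\ge0\}$ be a Markov configuration process on $\Omega$ with generator $\mathcal L$ satisfying $L_n U_\phi=U_\phi\mathcal L$ on functions $\Omega_n\to\mathbb R$ for every $n$. Then the following are equivalent: (a) for every $n\in\mathbb N$ and every permutation-invariant $g:V_{n-1}\to\mathbb R$, $L_n\Pi^{(n)}g=\Pi^{(n)}L_{n-1}g$; (b) $[\mathcal L,\mathcal A]=0$.
   Context: $V$ is a countable set, $\Lambda\subseteq\mathbb N_0$ the single-site state space. For $\mathbf x\in V^n$, $\phi(\mathbf x):=\sum_{i=1}^n\delta_{x_i}$. $\Omega_n:=\{\eta\in\Lambda^V:\sum_x\eta_x=n\}$, $\Omega=\bigcup_n\Omega_n$, $V_n:=\{\mathbf x\in V^n:\phi(\mathbf x)\in\Omega_n\}$, $U_\phi f:=f\circ\phi$. A function $g$ of $n$ variables is permutation-invariant if $g(x_1,\dots,x_n)=g(x_{\sigma(1)},\dots,x_{\sigma(n)})$ for all permutations $\sigma$. For $g$ a function of $n-1$ variables, $(\Pi^{(n)}g)(x_1,\dots,x_n):=\sum_{i=1}^n g(x_1,\dots,x_{i-1},x_{i+1},\dots,x_n)$. The annihilation operator acts on $f:\Omega\to\mathbb R$ by $\mathcal Af(\eta)=\sum_{x\in V}a_xf(\eta)$, where $a_xf(\eta)=\eta_xf(\eta-\delta_x)$ if $\eta_x\ge1$ and $0$ if $\eta_x=0$. $[\cdot,\cdot]$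 denotes the commutator. *)

(* Defs.v *)
From HB Require Import structures.
From mathcomp Require Import all_boot all_order all_fingroup all_algebra.
From mathcomp Require Import all_classical all_reals.
Set Implicit Arguments. Unset Strict Implicit. Unset Printing Implicit Defensive.
Import Order.TTheory GRing.Theory Num.Theory.
Local Open Scope ring_scope.
Local Open Scope classical_set_scope.

(* Configurations: eta : V -> nat (eta x = number of particles at x).
   Functions on Omega (resp. V_n) are encoded as total functions whose values
   only matter on Omega (resp. V_n). *)

Definition in_Omega (V : choiceType) (Lam : pred nat) (n : nat)
    (eta : V -> nat) : Prop :=
  (forall x, Lam (eta x)) /\ finite_set [set x | eta x != 0%N] /\
  (\sum_(x \in [set: V]) eta x)%R = n.

Definition in_OmegaAll (V : choiceType) (Lam : pred nat) (eta : V -> nat) : Prop :=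
  exists n, in_Omega Lam n eta.

Definition phi (V : eqType) (n : nat) (x : 'I_n -> V) : V -> nat :=
  fun y => #|[pred i : 'I_n | x i == y]|.

Definition in_Vn (V : choiceType) (Lam : pred nat) (n : nat) (x : 'I_n -> V) : Prop :=
  in_Omega Lam n (phi x).

Definition Uphi (V : eqType) (R : Type) (n : nat) (f : (V -> nat) -> R) :
  ('I_n -> V) -> R := fun x => f (phi x).

Definition sub_delta (V : eqType) (eta : V -> nat) (x : V) : V -> nat :=
  fun y => if y == x then (eta y).-1 else eta y.

Definition a_op (V : eqType) (R : realType) (x : V) (f : (V -> nat) -> R)
    (eta : V -> nat) : R :=
  if (0 < eta x)%N then (eta x)%:R * f (sub_delta eta x) else 0.

Definition Aop (V : choiceType) (R : realType) (f : (V -> nat) -> R)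
    (eta : V -> nat) : R :=
  \sum_(x \in [set: V]) a_op x f eta.

Definition drop_coord (V : Type) (n : nat) (x : 'I_n.+1 -> V) (i : 'I_n.+1) :
  'I_n -> V := fun j => x (lift i j).

Definition Pi (V : Type) (R : realType) (n : nat) (g : ('I_n -> V) -> R) :
  ('I_n.+1 -> V) -> R :=
  fun x => \sum_(i < n.+1) g (drop_coord x i).

Definition perm_invariant (V : choiceType) (Lam : pred nat) (R : Type) (n : nat)
    (g : ('I_n -> V) -> R) : Prop :=
  forall (s : {perm 'I_n}) (x : 'I_n -> V), in_Vn Lam x -> g (x \o s) = g x.


Definition op_on (X : Type) (R : realType) (P : X -> Prop)
    (T : (X -> R) -> (X -> R)) : Prop :=
  (forall f g, (forall x, P x -> f x = g x) -> forall x, P x -> T f x = T g x) /\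
  (forall (a : R) f g x, P x ->
     (T (fun y => a * f y + g y) x = a * T f x + T g x)%R).

(* Main.v *)
Require Import Defs.
From HB Require Import structures.
From mathcomp Require Import all_boot all_order all_fingroup all_algebra.
From mathcomp Require Import all_classical all_reals.
Set Implicit Arguments. Unset Strict Implicit. Unset Printing Implicit Defensive.
Import Order.TTheory GRing.Theory Num.Theory.
Local Open Scope ring_scope.
Local Open Scope classical_set_scope.

Lemma phiE (V : eqType) m (y : 'I_m -> V) z : phi y z = (\sum_(i < m) (y i == z))%N.
Proof.
rewrite /phi -sum1_card big_mkcond /=; apply: eq_bigr => i _.
by rewrite inE; case: (y i == z).
Qed.

Lemma FS (T : choiceType) (M : nmodType) (F : T -> M) (s : seq T) :
  uniq s -> (forall z, z \notin s -> F z = 0) ->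
  \sum_(z \in [set: T]) F z = \sum_(z <- s) F z.
Proof.
move=> us H; rewrite (fsbigE s) //.
  by apply: eq_bigl => z; rewrite in_setT.
by move=> i _; apply: H.
Qed.

Lemma Part (V : eqType) (M : nmodType) m (y : 'I_m -> V) (s : seq V) (G : 'I_m -> M) :
  uniq s -> (forall i, y i \in s) ->
  \sum_(z <- s) \sum_(i | y i == z) G i = \sum_i G i.
Proof.
move=> us ys.
under eq_bigr do rewrite big_mkcond.
rewrite exchange_big /=; apply: eq_bigr => i _.
rewrite -big_mkcond /=.
rewrite (eq_bigl (pred1 (y i))); last by move=> z; rewrite /= eq_sym.
by rewrite -big_filter filter_pred1_uniq // big_seq1.
Qed.

Lemma phi_perm (V : eqType) m (y : 'I_m -> V) (s : {perm 'I_m}) : phi (y \o s) = phi y.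
Proof.
apply: funext => z; rewrite !phiE.
by rewrite [RHS](reindex_inj (@perm_inj _ s)).
Qed.

Lemma phi_drop (V : eqType) m (x : 'I_m.+1 -> V) i :
  phi (drop_coord x i) = sub_delta (phi x) (x i).
Proof.
apply: funext => z; rewrite /sub_delta !phiE (bigD1_ord i) //=.
by rewrite eq_sym; case: eqP.
Qed.

Lemma a_opE (V : eqType) (R : realType) (x : V) f eta :
  a_op x f eta = (eta x)%:R * f (sub_delta eta x) :> R.
Proof. by rewrite /a_op; case: (eta x) => [|k] //=; rewrite mul0r. Qed.

Lemma undup_codom (V : eqType) m (y : 'I_m -> V) i : y i \in undup (codom y).
Proof. by rewrite mem_undup codomE; apply: map_f; rewrite mem_enum. Qed.

Lemma phi_out (V : eqType) m (y : 'I_m -> V) z : z \notin undup (codom y) -> phi y z = 0%N.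
Proof.
move=> H; rewrite phiE big1 // => i _.
by case: eqP => // E; move: H; rewrite -E undup_codom.
Qed.

Lemma AopPhi (V : countType) (R : realType) m (y : 'I_m -> V) (f : (V -> nat) -> R) :
  Aop f (phi y) = \sum_(i < m) f (sub_delta (phi y) (y i)).
Proof.
rewrite /Aop (FS (undup_uniq (codom y))); last first.
  by move=> z /phi_out H; rewrite a_opE H mul0r.
rewrite -(Part _ (undup_uniq (codom y)) (undup_codom y)).
apply: (@eq_bigr R 0 +%R) => z _; rewrite a_opE phiE natr_sum mulr_suml [RHS]big_mkcond /=.
apply: eq_bigr => i _; case: eqP => [->|]; by rewrite ?mul1r ?mul0r.
Qed.

Lemma mass_phi (V : countType) m (y : 'I_m -> V) :
  (\sum_(z \in [set: V]) phi y z)%R = m.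
Proof.
rewrite (FS (undup_uniq (codom y))); last by move=> z /phi_out.
rewrite -[RHS]card_ord -sum1_card.
rewrite -(Part _ (undup_uniq (codom y)) (undup_codom y)).
apply: eq_bigr => z _; rewrite phiE [RHS]big_mkcond /=.
by apply: eq_bigr => i _; case: eqP.
Qed.

Lemma VnE (V : countType) (Lam : pred nat) m (y : 'I_m -> V) :
  in_Vn Lam y <-> forall z, Lam (phi y z).
Proof.
split; first by case.
move=> H; split => //; split; last exact: mass_phi.
apply: (sub_finite_set _ (finite_seq (undup (codom y)))) => z /= Hz.
by apply: contraNT Hz => /phi_out ->.
Qed.

Lemma drop_Vn (V : countType) (Lam : pred nat) m (x : 'I_m.+1 -> V) i :
  (forall k : nat, Lam k.+1 -> Lam k) ->
  in_Vn Lam x -> in_Vn Lam (drop_coord x i).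
Proof.
move=> HLam /VnE H; apply/VnE => z; rewrite phi_drop /sub_delta.
case: eqP => _ //; move: (H z); case: (phi x z) => //= k; exact: HLam.
Qed.

Lemma cnt (V : eqType) m (y : 'I_m -> V) z :
  count_mem z (map y (enum 'I_m)) = (\sum_(i < m) (y i == z))%N.
Proof.
rewrite -sum1_count big_map big_enum_cond /= big_mkcond /=.
by apply: eq_bigr => i _; case: eqP.
Qed.

Lemma phi_perm_ex (V : eqType) m (y y' : 'I_m -> V) :
  phi y = phi y' -> exists p : {perm 'I_m}, y' = y \o p.
Proof.
move=> E.
have : perm_eq [tuple y' i | i < m] [tuple y i | i < m].
  by apply/allP => z _ /=; rewrite !cnt -!phiE E.
case/tuple_permP => p Ep; exists p; apply: funext => i.
have := congr1 (fun s : seq V => nth (y' i) s i) Ep.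
by rewrite -!tnth_nth !tnth_mktuple.
Qed.

Lemma Enum (V : countType) (Lam : pred nat) n (eta : V -> nat) :
  in_Omega Lam n eta -> exists y : 'I_n -> V, phi y = eta.
Proof.
case=> _ [fin mass].
case/finite_seqP: fin => s0 Es.
have us := undup_uniq s0.
have Hs : forall z, (z \in undup s0) = (eta z != 0%N).
  move=> z; rewrite mem_undup; apply/idP/idP => h.
    by have : [set` s0] z by []; rewrite -Es.
  by have : [set z | eta z != 0%N] z by []; rewrite Es.
rewrite (FS us) in mass; last by move=> z; rewrite Hs negbK => /eqP.
set t := flatten [seq nseq (eta z) z | z <- undup s0].
have ht : size t == n.
  rewrite size_flatten /shape -map_comp -mass sumnE big_map.
  by apply/eqP; apply: eq_bigr => z _ /=; rewrite size_nseq.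
exists (fun i => tnth (Tuple ht) i); apply: funext => z.
rewrite phiE -cnt map_tnth_enum /= /t count_flatten -map_comp sumnE big_map.
under eq_bigr do rewrite /= count_nseq.
case: (boolP (z \in undup s0)) => zs.
  rewrite (bigD1_seq z) //= eqxx mul1n big1 ?addn0 // => j /negbTE.
  by rewrite eq_sym => ->.
rewrite big1_seq; last first.
  move=> j /andP[_ js]; case: (eqVneq j z) => [E|ne]; last first.
    by have -> : pred1 z j = false by apply/negbTE.
  by move: zs; rewrite -E js.
by move: zs; rewrite Hs negbK => /eqP.
Qed.

From mathcomp Require Import lra.

Lemma op0 (X : Type) (R : realType) (P : X -> Prop) (T : (X -> R) -> (X -> R)) :
  op_on P T -> forall x, P x -> T (fun _ => 0) x = 0.
Proof.
move=> [H1 H2] x Px.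
have := H2 1 (fun _ => 0) (fun _ => 0) x Px.
rewrite (H1 (fun y => 1 * 0 + 0) (fun _ => 0)) //; last by move=> *; rewrite mul1r addr0.
move=> h; lra.
Qed.

Unset Implicit Arguments.
Close Scope classical_set_scope.

Theorem theorem2p7 (V : countType) (Lam : pred nat) (R : realType)
  (HLam : forall k : nat, Lam k.+1 -> Lam k)
  (L : forall n : nat, (('I_n -> V) -> R) -> (('I_n -> V) -> R))
  (LL : ((V -> nat) -> R) -> ((V -> nat) -> R))
  (HL : forall n : nat, op_on (@in_Vn V Lam n) (L n))
  (HLL : forall n : nat, op_on (in_Omega Lam n) LL)
  (Hinter : forall (n : nat) (f : (V -> nat) -> R) (x : 'I_n -> V),
     in_Vn Lam x -> L n (Uphi (n:=n) f) x = Uphi (n:=n) (LL f) x) :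
  (forall (n : nat) (g : ('I_n -> V) -> R), perm_invariant Lam g ->
     forall x : 'I_n.+1 -> V, in_Vn Lam x ->
       L n.+1 (Pi g) x = Pi (L n g) x)
  <->
  (forall (f : (V -> nat) -> R) (eta : V -> nat), in_OmegaAll Lam eta ->
     LL (Aop f) eta = Aop (LL f) eta).
Proof.
split.
- move=> Ha f eta [n Hn].
  have [y Ey] := Enum Hn.
  rewrite -Ey in Hn *.
  rewrite AopPhi.
  case: n y Ey Hn => [|m] y Ey Hn.
    rewrite big_ord0.
    transitivity (LL (fun _ => 0) (phi y)); last exact: (op0 (HLL 0%N)).
    apply: (HLL 0%N).1 => // e He.
    have [y' <-] := Enum He.
    by rewrite AopPhi big_ord0.
  have Hg : perm_invariant Lam (Uphi (n:=m) f).
    by move=> s w _; rewrite /Uphi phi_perm.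
  have := Ha m _ Hg y Hn.
  have PiE : forall w : 'I_m.+1 -> V, in_Vn Lam w -> Pi (Uphi (n:=m) f) w = Uphi (n:=m.+1) (Aop f) w.
    by move=> w _; rewrite /Pi /Uphi AopPhi; apply: eq_bigr => i _; rewrite phi_drop.
  rewrite ((HL m.+1).1 _ _ PiE y Hn) Hinter // /Uphi => ->.
  rewrite /Pi; apply: eq_bigr => i _.
  rewrite Hinter; last exact: drop_Vn.
  by rewrite /Uphi phi_drop.
- move=> Hb n g Hg x Hx.
  pose f : (V -> nat) -> R := fun eta =>
    match pselect (exists y : 'I_n -> V, phi y = eta) with
    | left P => g (projT1 (cid P)) | right _ => 0 end.
  have Hf : forall y, in_Vn Lam y -> f (phi y) = g y.
    move=> y Hy; rewrite /f; case: pselect => [P|[]]; last by exists y.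
    case: (cid P) => y0 /= E0.
    have [p ->] := phi_perm_ex (esym E0).
    exact: Hg.
  have PiE : forall w, in_Vn Lam w -> Pi g w = Uphi (n:=n.+1) (Aop f) w.
    move=> w Hw; rewrite /Pi /Uphi AopPhi; apply: eq_bigr => i _.
    by rewrite -phi_drop Hf //; apply: drop_Vn.
  rewrite ((HL n.+1).1 _ _ PiE x Hx) Hinter // /Uphi Hb; last by exists n.+1.
  rewrite AopPhi /Pi; apply: eq_bigr => i _.
  rewrite -phi_drop -[LHS]/(Uphi (n:=n) (LL f) (drop_coord x i)) -Hinter; last exact: drop_Vn.
  apply: (HL n).1 => [w Hw|]; first by rewrite /Uphi Hf.
  exact: drop_Vn.
Qed.
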